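(* Let $k\ge 2$, $n\ge 1$, $x=\zeta_k$, and let $H\in\mathrm{BH}(kn+k,k)$ have the block form \[H=\begin{pmatrix} S & F_k\otimes j_n\\ F_k^{\ast}\otimes j_n^{\top} & A\end{pmatrix},\] where $S$ is a circulant matrix in $\mathrm{BH}(k,k)$ and $A$ is a $kn\times kn$ matrix. Let $R_1$ and $C_1$ be the sets of the first $k$ rows and first $k$ columns of $H$, respectively, and for some $0\le m\le k-1$ let $R_2$ and $C_2$ be the sets of the $n$ consecutive rows, respectively columns, of $H$ with indices $k+mn+1,\dots,k+mn+n$. Let $\omega\in\langle x\rangle\setminus\{1\}$. Then the matrix obtained from $H$ by multiplying every entry of the submatrix with rows $R_1$ and columns $C_2$ by $\omega$, and simultaneously every entry of the submatrix with rows $R_2$ and columns $C_1$ by $\overline{\omega}$ (all other entries unchanged), is again in $\mathrm{BH}(kn+k,k)$.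
   Context: $\zeta_k=e^{2\pi\sqrt{-1}/k}$ and $\langle\zeta_k\rangle$ is the group of $k$-th roots of unity. A complex Hadamard matrix of order $N$ is an $N\times N$ matrix with entries of modulus $1$ and $HH^{\ast}=NI_N$. $\mathrm{BH}(N,k)$ is the set of $N\times N$ complex Hadamard matrices with all entries in $\langle\zeta_k\rangle$. A circulant matrix $\mathrm{circ}(s_0,\dots,s_{k-1})$ has $(i,j)$ entry $s_{(j-i)\bmod k}$ ($0\le i,j\le k-1$). $F_k=[x^{(i-1)(j-1)}]_{1\le i,j\le k}$, $j_n$ is the all-ones row vector of length $n$, and $\otimes$ is the Kronecker product $A\otimes B=[a_{ij}B]$. *)

(* Defs.v *)
From mathcomp Require Import all_boot all_order all_algebra all_field.
From mathcomp Require Import mxtens.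
Set Implicit Arguments. Unset Strict Implicit. Unset Printing Implicit Defensive.
Import Order.TTheory GRing.Theory Num.Theory.
Local Open Scope ring_scope.

(* zeta_k = e^{2 pi i / k} in algC: k.-root (-1) is the k-th root of -1 with
   minimal nonnegative argument, i.e. e^{i pi / k}; its square is e^{2 pi i/k}. *)
Definition zeta (k : nat) : algC := (k.-root (-1)) ^+ 2.

Definition in_roots (k : nat) (a : algC) : Prop := exists e : nat, a = zeta k ^+ e.

Definition ctrmx (m n : nat) (M : 'M[algC]_(m, n)) : 'M[algC]_(n, m) :=
  (map_mx (fun z => z^*) M)^T.

Definition BH (N k : nat) (H : 'M[algC]_N) : Prop :=
  (forall i j, in_roots k (H i j)) /\ H *m ctrmx H = (N%:R : algC)%:M.

Definition circ (k : nat) (s : nat -> algC) : 'M[algC]_k :=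
  \matrix_(i < k, j < k) s ((j + k - i) %% k)%N.

Definition is_circulant (k : nat) (S : 'M[algC]_k) : Prop :=
  exists s : nat -> algC, S = circ k s.

(* F_k = [x^{(i-1)(j-1)}], 0-indexed *)
Definition Fmx (k : nat) (x : algC) : 'M[algC]_k := \matrix_(i < k, j < k) x ^+ (i * j).

Notation kron := tensmx.

Definition jrow (n : nat) : 'rV[algC]_n := const_mx 1.
Arguments BH N k H : clear implicits.

(* Main.v *)
Require Import Defs.
From mathcomp Require Import all_boot all_order all_algebra all_field mxtens.
From mathcomp Require Import ring zify.
Import Order.TTheory GRing.Theory Num.Theory.
Local Open Scope ring_scope.

Lemma zeta_facts k : (0 < k)%N ->
  [/\ zeta k ^+ k = 1, zeta k * (zeta k)^* = 1 & (zeta k)^* = zeta k ^+ k.-1].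
Proof.
move=> k0.
have xk : zeta k ^+ k = 1.
  by rewrite /zeta -exprM mulnC exprM rootCK // expr2 mulN1r opprK.
have xu : zeta k * (zeta k)^* = 1.
  have : `|zeta k| ^+ k == 1 by rewrite -normrX xk normr1.
  rewrite pexpr_eq1 // => /eqP h.
  by rewrite -normCK h expr1n.
split => //.
have e : zeta k ^+ k = zeta k * zeta k ^+ k.-1 by rewrite -exprS prednK.
by rewrite -[LHS]mulr1 -xk e mulrA [_^* * _]mulrC xu mul1r.
Qed.

Lemma roots_unit k a : (0 < k)%N -> in_roots k a -> a * a^* = 1.
Proof.
move=> k0 [e ->]; have [_ xu _] := zeta_facts k k0.
by rewrite rmorphXn -exprMn xu expr1n.
Qed.

Lemma rootsM k a b : in_roots k a -> in_roots k b -> in_roots k (a * b).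
Proof. by move=> [e ->] [e' ->]; exists (e + e')%N; rewrite exprD. Qed.

Lemma rootsC k a : (0 < k)%N -> in_roots k a -> in_roots k a^*.
Proof.
move=> k0 [e ->]; have [_ _ xc] := zeta_facts k k0.
by exists (k.-1 * e)%N; rewrite exprM -xc rmorphXn.
Qed.

Lemma roots1 k : in_roots k 1.
Proof. by exists 0%N. Qed.

Lemma Rr_tens (k m n b u : nat) : (u < n)%N ->
  ((k + m * n <= k + (b * n + u)) && (k + (b * n + u) < k + m * n + n))%N = (b == m).
Proof.
move=> un; apply/idP/eqP => [/andP [h1 h2]|->]; last by apply/andP; split; lia.
nia.
Qed.

Lemma mod_aux (k l i : nat) : (l < k)%N -> (i < k)%N -> (((l + i) %% k + k - i) %% k = l)%N.
Proof.
move=> lk ik; case: (ltnP (l + i) k) => h.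
  rewrite (modn_small h).
  have -> : (l + i + k - i = l + k)%N by lia.
  by rewrite modnDr modn_small.
rewrite -[(l + i)%N](subnK h) modnDr (@modn_small (l + i - k)); last by lia.
have -> : (l + i - k + k - i = l)%N by lia.
by rewrite modn_small.
Qed.

Lemma mod_aux2 (k j i : nat) : (j < k)%N -> (i < k)%N -> (((j + k - i) %% k + i) %% k = j)%N.
Proof.
move=> jk ik; case: (ltnP (j + k - i) k) => h.
  rewrite (modn_small h).
  have -> : (j + k - i + i = j + k)%N by lia.
  by rewrite modnDr modn_small.
rewrite -[(j + k - i)%N](subnK h) modnDr (@modn_small (j + k - i - k)); last by lia.
have -> : (j + k - i - k + i = j)%N by lia.
by rewrite modn_small.
Qed.

Lemma circ_sum k (s : nat -> algC) (x : algC) (i a : 'I_k) : x ^+ k = 1 ->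
  \sum_(j < k) circ k s i j * x ^+ (j * a) = x ^+ (i * a) * \sum_(l < k) s l * x ^+ (l * a).
Proof.
move=> xk.
have k0 : (0 < k)%N by apply: leq_ltn_trans (ltn_ord i).
pose h (l : 'I_k) : 'I_k := Ordinal (ltn_pmod (l + i) k0).
pose g (j : 'I_k) : 'I_k := Ordinal (ltn_pmod (j + k - i) k0).
rewrite (reindex h); last first.
  by exists g => j _; apply: val_inj => /=; rewrite ?mod_aux ?mod_aux2.
rewrite mulr_sumr; apply: eq_bigr => l _.
rewrite /circ mxE /= mod_aux //.
rewrite exprM expr_mod // -exprM mulnDl exprD; ring.
Qed.
Lemma sum_tens (k n : nat) (F : 'I_(k*n) -> algC) :
  \sum_(j < k*n) F j = \sum_(b < k) \sum_(t < n) F (mxtens_index (b,t)).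
Proof.
rewrite pair_big /= (reindex (@mxtens_index k n)) //=.
  by apply: eq_bigr => -[].
by exists (@mxtens_unindex k n) => i _; rewrite (mxtens_indexK, mxtens_unindexK).
Qed.

Lemma Hentries (k n : nat) (S : 'M[algC]_k) (A : 'M[algC]_(k * n)) (x : algC) (H : 'M[algC]_(k + k * n)) :
  H = block_mx S (castmx (muln1 k, erefl (k * n)%N) (kron (Fmx k x) (jrow n)))
                       (castmx (erefl (k * n)%N, muln1 k) (kron (ctrmx (Fmx k x)) (jrow n)^T)) A ->
  [/\ forall i j, H (lshift _ i) (lshift _ j) = S i j,
      forall i b t, H (lshift _ i) (rshift _ (mxtens_index (b, t))) = x ^+ (i * b),
      forall a t j, H (rshift _ (mxtens_index (a, t))) (lshift _ j) = (x ^+ (j * a))^* &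
      forall a t b u, H (rshift _ (mxtens_index (a, t))) (rshift _ (mxtens_index (b, u))) =
          A (mxtens_index (a, t)) (mxtens_index (b, u))].
Proof.
move=> ->; split => *.
- by rewrite block_mxEul.
- by rewrite block_mxEur castmxE /= !mxE cast_ord_id mxtens_indexK /= divn1 mulr1.
- by rewrite block_mxEdl castmxE /= !mxE cast_ord_id mxtens_indexK /= divn1 mulr1.
- by rewrite block_mxEdr.
Qed.

Theorem corollary5p4 (k n : nat) (hk : (2 <= k)%N) (hn : (1 <= n)%N)
  (S : 'M[algC]_k) (A : 'M[algC]_(k * n)) (H : 'M[algC]_(k + k * n))
  (hS : is_circulant S) (hSBH : BH k k S)
  (hH : H = block_mx S (castmx (muln1 k, erefl (k * n)%N) (kron (Fmx k (zeta k)) (jrow n)))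
                       (castmx (erefl (k * n)%N, muln1 k) (kron (ctrmx (Fmx k (zeta k))) (jrow n)^T)) A)
  (hHBH : BH (k + k * n) k H)
  (m : nat) (hm : (m < k)%N)
  (w : algC) (hw : in_roots k w) (hw1 : w != 1) :
  BH (k + k * n) k
    (\matrix_(i, j)
       (H i j *
        (if ((i < k)%N && (k + m * n <= j < k + m * n + n)%N) then w
         else if ((k + m * n <= i < k + m * n + n)%N && (j < k)%N) then w^*
         else 1))).
Proof.
have k0 : (0 < k)%N by apply: leq_trans hk.
have [xk xu xc] := zeta_facts k k0.
have hwu : w * w^* = 1 := roots_unit k w k0 hw.
have [E11 E12 E21 E22] := @Hentries k n S A (zeta k) H hH.
case: hS => s Sdef; subst S.
set x := zeta k in xk xu xc E12 E21.
have [Hroots HH] := hHBH.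
have Gorth : forall p q, \sum_j H p j * (H q j)^* = (k + k * n)%:R *+ (p == q).
  move=> p q; move/matrixP: HH => /(_ p q); rewrite !mxE => <-.
  by apply: eq_bigr => j _; rewrite /ctrmx !mxE.
have [_ HS] := hSBH.
have Sorth : forall i i' : 'I_k, \sum_j circ k s i j * (circ k s i' j)^* = k%:R *+ (i == i').
  move=> i i'; move/matrixP: HS => /(_ i i'); rewrite !mxE => <-.
  by apply: eq_bigr => j _; rewrite /ctrmx !mxE.
have neqLR : forall (i : 'I_k) (r : 'I_(k * n)), (lshift (k * n) i == rshift k r) = false.
  move=> i r; apply/negbTE/eqP => /(congr1 val) /=; have := ltn_ord i; lia.
have Forth : forall i i' : 'I_k, \sum_(b < k) x ^+ (i * b) * (x ^+ (i' * b))^* = k%:R *+ (i == i').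
  move=> i i'; have [<-|ne] := eqVneq i i'.
    rewrite (eq_bigr (fun _ => 1)); last by move=> b _; apply: (roots_unit _ _ k0); exists (i * b)%N.
    by rewrite sumr_const card_ord.
  have := Gorth (lshift _ i) (lshift _ i').
  rewrite big_split_ord /= sum_tens (inj_eq (@lshift_inj _ _)) (negbTE ne) mulr0n.
  under eq_bigr => j _ do rewrite !E11.
  rewrite Sorth (negbTE ne) mulr0n add0r.
  rewrite (eq_bigr (fun b : 'I_k => (x ^+ (i * b) * (x ^+ (i' * b))^*) *+ n)); last first.
    by move=> b _; under eq_bigr => t _ do rewrite !E12; rewrite sumr_const card_ord.
  rewrite sumrMnl => /eqP; rewrite mulrn_eq0 => /orP [|/eqP] //.
  by rewrite eqn0Ngt hn.
have Bzero : forall (a : 'I_k) (t : 'I_n) (c : 'I_k),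
    \sum_(u < n) (A (mxtens_index (a, t)) (mxtens_index (c, u)))^* =
    - (\sum_(l < k) s l * x ^+ (l * a)) *+ (a == c).
  move=> a t c.
  set lam := \sum_(l < k) s l * x ^+ (l * a).
  pose beta (b : 'I_k) := \sum_(u < n) (A (mxtens_index (a, t)) (mxtens_index (b, u)))^*.
  have row : forall i : 'I_k, x ^+ (i * a) * lam + \sum_(b < k) x ^+ (i * b) * beta b = 0.
    move=> i; have := Gorth (lshift _ i) (rshift _ (mxtens_index (a, t))).
    rewrite big_split_ord /= sum_tens neqLR mulr0n.
    under eq_bigr => j _ do rewrite E11 E21 conjCK.
    rewrite circ_sum // => h; apply: etrans h; congr (_ + _); apply: eq_bigr => b _.
    by rewrite /beta mulr_sumr; apply: eq_bigr => u _; rewrite E12 E22.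
  have e : \sum_(i < k) (x ^+ (i * c))^* * (x ^+ (i * a) * lam + \sum_(b < k) x ^+ (i * b) * beta b)
           = k%:R * (lam *+ (a == c) + beta c).
    under eq_bigr => i _ do rewrite mulrDr.
    rewrite big_split /=.
    rewrite (eq_bigr (fun i : 'I_k => lam * (x ^+ (a * i) * (x ^+ (c * i))^*))); last first.
      by move=> i _; rewrite [(i * a)%N]mulnC [(i * c)%N]mulnC; ring.
    rewrite -mulr_sumr Forth.
    rewrite (eq_bigr (fun i : 'I_k => \sum_(b < k) beta b * (x ^+ (b * i) * (x ^+ (c * i))^*))); last first.
      move=> i _; rewrite mulr_sumr; apply: eq_bigr => b _.
      by rewrite [(i * b)%N]mulnC [(i * c)%N]mulnC; ring.
    rewrite exchange_big /=.
    under eq_bigr => b _ do rewrite -mulr_sumr Forth.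
    rewrite (bigD1 c) //= eqxx big1; last by move=> b /negbTE ->; rewrite mulr0n mulr0.
    by case: (a == c); rewrite /= ?mulr0n ?mulr1n; ring.
  move: e; rewrite big1; last by move=> i _; rewrite row mulr0.
  move/esym/eqP; rewrite mulf_eq0 pnatr_eq0 eqn0Ngt k0 /= addr_eq0 => /eqP h.
  have : beta c = - (lam *+ (a == c)) by rewrite h opprK.
  by rewrite /beta => ->; rewrite mulNrn.
pose f (p j : 'I_(k + k * n)) : algC :=
  if ((p < k)%N && (k + m * n <= j < k + m * n + n)%N) then w
  else if ((k + m * n <= p < k + m * n + n)%N && (j < k)%N) then w^* else 1.
change (BH (k + k * n) k (\matrix_(i < k + k * n, j < k + k * n) (H i j * f i j))).
have TL : forall i : 'I_k, (lshift (k * n) i < k)%N = true by move=> i /=; rewrite ltn_ord.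
have TR : forall r : 'I_(k * n), (rshift k r < k)%N = false by move=> r /=; lia.
have RL : forall i : 'I_k, (k + m * n <= lshift (k * n) i < k + m * n + n)%N = false.
  by move=> i /=; have := ltn_ord i; lia.
have RR : forall (a : 'I_k) (t : 'I_n),
    (k + m * n <= rshift k (mxtens_index (a, t)) < k + m * n + n)%N = (a == m :> nat).
  by move=> a t /=; rewrite Rr_tens.
have fLL : forall i j : 'I_k, f (lshift _ i) (lshift _ j) = 1.
  by move=> i j; rewrite /f TL RL /= RL.
have fLR : forall (i b : 'I_k) (u : 'I_n),
    f (lshift _ i) (rshift _ (mxtens_index (b, u))) = if (b == m :> nat) then w else 1.
  by move=> i b u; rewrite /f TL RR RL /=; case: (b == m :> nat).
have fRL : forall (a : 'I_k) (t : 'I_n) (j : 'I_k),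
    f (rshift _ (mxtens_index (a, t))) (lshift _ j) = if (a == m :> nat) then w^* else 1.
  by move=> a t j; rewrite /f TR RR TL /= andbT.
have fRR : forall (a : 'I_k) (t : 'I_n) (r : 'I_(k * n)),
    f (rshift _ (mxtens_index (a, t))) (rshift _ r) = 1.
  by move=> a t r; rewrite /f TR TR /= andbF.
have froot : forall p j, in_roots k (f p j).
  move=> p j; rewrite /f; case: ifP => _; first exact: hw.
  case: ifP => _; first exact: rootsC.
  exact: roots1.
have funit : forall p j, f p j * (f p j)^* = 1.
  by move=> p j; apply: (roots_unit _ _ k0).
pose G' (p q : 'I_(k + k * n)) := \sum_j (H p j * f p j) * (H q j * f q j)^*.
have same : forall p q : 'I_(k + k * n), (p < k)%N = (q < k)%N ->
    (k + m * n <= p < k + m * n + n)%N = (k + m * n <= q < k + m * n + n)%N ->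
    G' p q = (k + k * n)%:R *+ (p == q).
  move=> p q e1 e2; rewrite -Gorth; apply: eq_bigr => j _.
  have fe : f p j = f q j by rewrite /f e1 e2.
  by rewrite fe rmorphM mulrACA funit mulr1.
have Gsym : forall p q : 'I_(k + k * n), G' q p = (G' p q)^*.
  move=> p q; rewrite /G' rmorph_sum; apply: eq_bigr => j _.
  by rewrite [RHS]rmorphM /= conjCK mulrC.
have neqRR : forall (a a' : 'I_k) (t t' : 'I_n), a != a' ->
    (rshift k (mxtens_index (a, t)) == rshift k (mxtens_index (a', t'))) = false.
  move=> a a' t t' ne; apply/negbTE/eqP => /rshift_inj /(congr1 (@mxtens_unindex k n)).
  by rewrite !mxtens_indexK => -[e _]; rewrite e eqxx in ne.
have key1 : forall (i a : 'I_k) (t : 'I_n), G' (lshift _ i) (rshift _ (mxtens_index (a, t))) = 0.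
  move=> i a t; rewrite /G' big_split_ord /= sum_tens.
  under eq_bigr => j _ do rewrite E11 E21 fLL fRL.
  rewrite (eq_bigr (fun j : 'I_k => circ k s i j * x ^+ (j * a) * (if (a == m :> nat) then w^* else 1)^*)); last first.
    by move=> j _; rewrite mulr1 rmorphM /= conjCK mulrA.
  rewrite -mulr_suml circ_sum //.
  set lam := \sum_(l < k) s l * x ^+ (l * a).
  rewrite (eq_bigr (fun b : 'I_k => x ^+ (i * b) * (if (b == m :> nat) then w else 1) * \sum_(u < n) (A (mxtens_index (a, t)) (mxtens_index (b, u)))^*)); last first.
    move=> b _; rewrite mulr_sumr; apply: eq_bigr => u _.
    by rewrite E12 E22 fLR fRR mulr1.
  under eq_bigr => b _ do rewrite Bzero -/lam.
  rewrite (bigD1 a) //= ?eqxx big1 ?addr0; last first.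
    by move=> b nb; rewrite eq_sym in nb; rewrite (negbTE nb) mulr0n mulr0.
  case: (a == m :> nat); rewrite /= ?conjCK ?rmorph1 mulr1n; ring.
have key2 : forall (a a' : 'I_k) (t t' : 'I_n), (a == m :> nat) -> (a' != m :> nat) ->
    G' (rshift _ (mxtens_index (a, t))) (rshift _ (mxtens_index (a', t'))) = 0.
  move=> a a' t t' ha ha'.
  have ne : a != a' by apply: contraNneq ha' => <-.
  have F0 : \sum_(j < k) (x ^+ (j * a))^* * x ^+ (j * a') = 0.
    have := Forth a' a; rewrite eq_sym (negbTE ne) mulr0n => h; apply: etrans h.
    by apply: eq_bigr => j _; rewrite mulrC [(j * a)%N]mulnC [(j * a')%N]mulnC.
  transitivity (\sum_j H (rshift _ (mxtens_index (a, t))) j * (H (rshift _ (mxtens_index (a', t'))) j)^*); last first.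
    by rewrite Gorth neqRR // mulr0n.
  rewrite /G' !big_split_ord /= !sum_tens; congr (_ + _).
    rewrite (eq_bigr (fun j : 'I_k => (x ^+ (j * a))^* * x ^+ (j * a') * w^*)); last first.
      by move=> j _; rewrite !E21 !fRL ha (negbTE ha') mulr1 conjCK; ring.
    rewrite -mulr_suml F0 mul0r.
    rewrite (eq_bigr (fun j : 'I_k => (x ^+ (j * a))^* * x ^+ (j * a'))) ?F0 //.
    by move=> j _; rewrite !E21 conjCK.
  apply: eq_bigr => b _; apply: eq_bigr => u _.
  by rewrite !fRR !mulr1.
split.
  by move=> i j; rewrite mxE; apply: rootsM.
apply/matrixP => p q; rewrite !mxE.
transitivity (G' p q).
  by apply: eq_bigr => j _; rewrite /ctrmx !mxE.
case: (split_ordP p) => [i ->|r ->]; case: (split_ordP q) => [i' ->|r' ->].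
- by apply: same; rewrite ?TL ?RL.
- by case: (mxtens_indexP r') => a t; rewrite key1 neqLR mulr0n.
- case: (mxtens_indexP r) => a t.
  by rewrite Gsym key1 /= conjC0 eq_sym neqLR mulr0n.
- case: (mxtens_indexP r) => a t; case: (mxtens_indexP r') => a' t'.
  have [ha|ha] := boolP (a == m :> nat); have [ha'|ha'] := boolP (a' == m :> nat).
  + by apply: same; rewrite ?TR ?RR ?ha ?ha'.
  + have ne : a != a' by apply: contraNneq ha' => <-.
    by rewrite key2 // neqRR // mulr0n.
  + have ne : a' != a by apply: contraNneq ha => <-.
    by rewrite Gsym key2 // conjC0 eq_sym neqRR // mulr0n.
  + by apply: same; rewrite ?TR ?RR ?(negbTE ha) ?(negbTE ha').
Qed.
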